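(* Let $\varepsilon>0$, $\alpha$ an ordinal, and $h\in d_\varepsilon^\alpha(B_{\ell_1([0,\omega])})$. Then for every $m\in\mathbb N$, $\tau_m h\in d_\varepsilon^\alpha(B_{\ell_1([0,\omega])})$, where $\tau_m:\ell_1([0,\omega])\to\ell_1([0,\omega])$ is defined by $\tau_m h(n)=h(n-m)$ for $m\le n<\omega$, $\tau_m h(n)=0$ for $n<m$, and $\tau_m h(\omega)=h(\omega)$.
   Context: $[0,\omega]=\{0,1,2,\dots\}\cup\{\omega\}$ with the order topology (a convergent sequence with its limit), and $\ell_1([0,\omega])$ is identified with the dual of $C([0,\omega])$, carrying the corresponding weak$^*$-topology. For a weak$^*$-compact $K\subset X^*$: for $x\in X,t\in\mathbb R$, $H(x,t)=\{x^*: x^*(x)>t\}$; a weak$^*$-slice of $K$ is a nonempty $H(x,t)\cap K$; $d_\varepsilon K$ is $K$ minus the union of all weak$^*$-slices of $K$ of norm diameter $<\varepsilon$; $d_\varepsilon^0K=K$, $d_\varepsilon^{\beta+1}K=d_\varepsilon(d_\varepsilon^\beta K)$, $d_\varepsilon^\beta K=\bigcap_{\mu<\beta}d_\varepsilon^\mu K$ for limit $\beta$. *)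

(* Defs.v *)
From Stdlib Require Import Reals Arith.
Open Scope R_scope.

(* An element h of l_1([0,omega]) = C([0,omega])^*:
   lseq h n = h(n) for n < omega, lom h = h(omega).
   Summability is not part of the type; it is implied by membership in the
   unit ball below. *)
Record L1 := mkL1 { lseq : nat -> R ; lom : R }.

Definition l1_norm_le (h : L1) (r : R) : Prop :=
  forall N : nat, sum_f_R0 (fun n => Rabs (lseq h n)) N + Rabs (lom h) <= r.

Definition l1_sub (g k : L1) : L1 :=
  mkL1 (fun n => lseq g n - lseq k n) (lom g - lom k).

Definition Ball (h : L1) : Prop := l1_norm_le h 1.

(* An element of C([0,omega]) is a convergent sequence x with limit l
   (x(omega) = l).  Duality: <h, x> = sum_n h(n) x(n) + h(omega) l.
   pair_gt h x l t  means  <h,x> > t. *)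
Definition pair_gt (h : L1) (x : nat -> R) (l t : R) : Prop :=
  exists s : R, infinite_sum (fun n => lseq h n * x n) s /\ s + lom h * l > t.

Definition slice (S : L1 -> Prop) (x : nat -> R) (l t : R) (g : L1) : Prop :=
  S g /\ pair_gt g x l t.

Definition diam_lt (A : L1 -> Prop) (eps : R) : Prop :=
  exists delta : R, delta < eps /\
    forall g k : L1, A g -> A k -> l1_norm_le (l1_sub g k) delta.

Definition d_eps (eps : R) (S : L1 -> Prop) (h : L1) : Prop :=
  S h /\
  ~ (exists (x : nat -> R) (l t : R),
        Un_cv x l /\
        (exists g, slice S x l t g) /\
        diam_lt (slice S x l t) eps /\
        slice S x l t h).

(* Ordinals are represented by elements of an arbitrary well-ordered type
   (O, lt); transfinite iteration by well-founded recursion. *)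
Section Iter.
Variables (O : Type) (lt : O -> O -> Prop) (wf : well_founded lt).

Definition is_zero (b : O) : Prop := forall m, ~ lt m b.
Definition is_pred (g b : O) : Prop := lt g b /\ forall m, lt g m -> ~ lt m b.
Definition is_limit (b : O) : Prop := ~ is_zero b /\ ~ (exists g, is_pred g b).

Definition iter_step (D : (L1 -> Prop) -> (L1 -> Prop)) (K : L1 -> Prop)
  (b : O) (rec : forall m, lt m b -> L1 -> Prop) : L1 -> Prop :=
  fun h =>
    (is_zero b /\ K h)
    \/ (exists g (H : lt g b), is_pred g b /\ D (rec g H) h)
    \/ (is_limit b /\ forall m (H : lt m b), rec m H h).

(* d^b K with d^0 K = K, d^{g+1} K = D (d^g K), d^b K = ∩_{m<b} d^m K (b limit) *)
Definition deriv_iter (D : (L1 -> Prop) -> (L1 -> Prop)) (K : L1 -> Prop) :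
  O -> L1 -> Prop :=
  Fix wf (fun _ => L1 -> Prop) (iter_step D K).
End Iter.

Definition tau (m : nat) (h : L1) : L1 :=
  mkL1 (fun n => if Nat.ltb n m then 0 else lseq h (n - m)%nat) (lom h).

(* Main.v *)
Require Import Defs.
From Stdlib Require Import Reals Arith Lia Lra FunctionalExtensionality.
Open Scope R_scope.

Definition sh (m : nat) (G : nat -> R) (n : nat) : R :=
  if Nat.ltb n m then 0 else G (n - m)%nat.

Lemma sh_zero m G N : (N < m)%nat -> sum_f_R0 (sh m G) N = 0.
Proof.
  induction N; intro H; simpl.
  - unfold sh. replace (Nat.ltb 0 m) with true by (symmetry; apply Nat.ltb_lt; lia). reflexivity.
  - rewrite IHN by lia. unfold sh. replace (Nat.ltb (S N) m) with true by (symmetry; apply Nat.ltb_lt; lia). ring.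
Qed.

Lemma sh_sum m G N : sum_f_R0 (sh m G) (m + N) = sum_f_R0 G N.
Proof.
  induction N.
  - rewrite Nat.add_0_r. destruct m as [|m'].
    + simpl. unfold sh. simpl. reflexivity.
    + simpl. rewrite sh_zero by lia. unfold sh.
      replace (Nat.ltb (S m') (S m')) with false by (symmetry; apply Nat.ltb_ge; lia).
      rewrite Nat.sub_diag. ring.
  - replace (m + S N)%nat with (S (m + N)) by lia. simpl. rewrite IHN. unfold sh.
    replace (Nat.ltb (S (m + N)) m) with false by (symmetry; apply Nat.ltb_ge; lia).
    replace (S (m + N) - m)%nat with (S N) by lia. reflexivity.
Qed.

Lemma psum_back m G a r : (forall N, sum_f_R0 (sh m G) N + a <= r) ->
  forall N, sum_f_R0 G N + a <= r.
Proof. intros H N. rewrite <- (sh_sum m). apply H. Qed.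

Lemma psum_fwd m G a r : (forall n, 0 <= G n) -> (forall N, sum_f_R0 G N + a <= r) ->
  forall N, sum_f_R0 (sh m G) N + a <= r.
Proof.
  intros Hp H N. destruct (Nat.lt_ge_cases N m).
  - rewrite sh_zero by lia. specialize (H 0%nat). simpl in H. specialize (Hp 0%nat). lra.
  - replace N with (m + (N - m))%nat by lia. rewrite sh_sum. apply H.
Qed.

Lemma isum_fwd m G s : infinite_sum G s -> infinite_sum (sh m G) s.
Proof.
  intros H e He. destruct (H e He) as [N0 HN]. exists (N0 + m)%nat. intros n Hn.
  replace n with (m + (n - m))%nat by lia. rewrite sh_sum. apply HN. lia.
Qed.

Lemma isum_back m G s : infinite_sum (sh m G) s -> infinite_sum G s.
Proof.
  intros H e He. destruct (H e He) as [N0 HN]. exists N0. intros n Hn.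
  rewrite <- (sh_sum m). apply HN. lia.
Qed.

Lemma tau_abs m f : forall N, sum_f_R0 (fun n => Rabs (lseq (tau m f) n)) N =
  sum_f_R0 (sh m (fun n => Rabs (lseq f n))) N.
Proof.
  intro N. apply sum_eq. intros i _. unfold tau, sh; simpl.
  destruct (Nat.ltb i m); [apply Rabs_R0 | reflexivity].
Qed.

Lemma tau_sub_abs m g k : forall N,
  sum_f_R0 (fun n => Rabs (lseq (l1_sub (tau m g) (tau m k)) n)) N =
  sum_f_R0 (sh m (fun n => Rabs (lseq (l1_sub g k) n))) N.
Proof.
  intro N. apply sum_eq. intros i _. unfold tau, sh, l1_sub; simpl.
  destruct (Nat.ltb i m); [ rewrite Rminus_0_r; apply Rabs_R0 | reflexivity].
Qed.

Lemma tau_pair m g x : forall N,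
  sum_f_R0 (fun n => lseq (tau m g) n * x n) N =
  sum_f_R0 (sh m (fun n => lseq g n * x (n + m)%nat)) N.
Proof.
  intro N. apply sum_eq. intros i _. unfold tau, sh; simpl.
  destruct (Nat.ltb i m) eqn:E; [ ring |].
  apply Nat.ltb_ge in E. replace (i - m + m)%nat with i by lia. reflexivity.
Qed.

Lemma isum_ext F G s : (forall N, sum_f_R0 F N = sum_f_R0 G N) ->
  infinite_sum F s -> infinite_sum G s.
Proof.
  intros E H e He. destruct (H e He) as [N0 HN]. exists N0. intros n Hn.
  rewrite <- E. apply HN. auto.
Qed.

Lemma pair_tau_back m g x l t : pair_gt (tau m g) x l t ->
  pair_gt g (fun n => x (n + m)%nat) l t.
Proof.
  intros [s [Hs Ht]]. exists s. split; [|exact Ht].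
  apply (isum_back m). eapply isum_ext; [|exact Hs]. apply tau_pair.
Qed.

Lemma pair_tau_fwd m g x l t : pair_gt g (fun n => x (n + m)%nat) l t ->
  pair_gt (tau m g) x l t.
Proof.
  intros [s [Hs Ht]]. exists s. split; [|exact Ht].
  eapply isum_ext; [|apply (isum_fwd m); exact Hs]. intro N. symmetry. apply tau_pair.
Qed.

Lemma ball_tau m h : Ball h -> Ball (tau m h).
Proof.
  unfold Ball, l1_norm_le. intros H N. rewrite tau_abs. simpl.
  apply psum_fwd; [intro; apply Rabs_pos | exact H].
Qed.

Lemma d_eps_tau eps S m h : (forall g, S g -> S (tau m g)) ->
  d_eps eps S h -> d_eps eps S (tau m h).
Proof.
  intros Hcl [Sh Hn]. split; [auto|].
  intros [x [l [t [Hcv [_ [[d [Hd Hdiam]] [Sth Ptau]]]]]]].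
  apply Hn. exists (fun n => x (n + m)%nat), l, t. split; [|split; [|split]].
  - intros e He. destruct (Hcv e He) as [N0 HN]. exists N0. intros n Hn'. apply HN. lia.
  - exists h. split; [exact Sh | apply pair_tau_back; exact Ptau].
  - exists d. split; [exact Hd|]. intros g k [Sg Pg] [Sk Pk].
    assert (Hgk := Hdiam (tau m g) (tau m k) (conj (Hcl g Sg) (pair_tau_fwd _ _ _ _ _ Pg))
                         (conj (Hcl k Sk) (pair_tau_fwd _ _ _ _ _ Pk))).
    unfold l1_norm_le in *. intro N.
    apply (psum_back m (fun n => Rabs (lseq (l1_sub g k) n))).
    intro N'. rewrite <- tau_sub_abs. apply Hgk.
  - split; [exact Sh | apply pair_tau_back; exact Ptau].
Qed.

Theorem mainTheorem6
  (O : Type) (lt : O -> O -> Prop) (wf : well_founded lt)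
  (lt_trans : forall a b c, lt a b -> lt b c -> lt a c)
  (lt_total : forall a b, lt a b \/ a = b \/ lt b a)
  (eps : R) (alpha : O) (h : L1) :
  eps > 0 ->
  deriv_iter O lt wf (d_eps eps) Ball alpha h ->
  forall m : nat, deriv_iter O lt wf (d_eps eps) Ball alpha (tau m h).
Proof.
  intros _ Hh m. revert h Hh.
  assert (Feq : forall b, deriv_iter O lt wf (d_eps eps) Ball b =
     iter_step O lt (d_eps eps) Ball b (fun y _ => deriv_iter O lt wf (d_eps eps) Ball y)).
  { intro b. unfold deriv_iter. apply (Fix_eq wf (fun _ => L1 -> Prop) (iter_step O lt (d_eps eps) Ball)).
    intros x f g E. assert (f = g).
    { apply functional_extensionality_dep; intro y.
      apply functional_extensionality_dep; intro p. apply E. }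
    subst. reflexivity. }
  induction alpha as [b IH] using (well_founded_ind wf).
  intros h Hh. rewrite Feq in Hh |- *.
  destruct Hh as [[Hz Hb] | [[g [Hg [Hp Hd]]] | [Hl Hall]]].
  - left. split; [exact Hz | apply ball_tau; exact Hb].
  - right; left. exists g, Hg. split; [exact Hp|].
    apply d_eps_tau; [| exact Hd]. intros k Hk. apply IH; auto.
  - right; right. split; [exact Hl|]. intros m' H. apply IH; auto.
Qed.
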